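(* Let $f=\frac1n\sum_{i=1}^n f_i$ where each $f_i:\mathbb{R}^d\to\mathbb{R}$ is convex, differentiable and $L$-smooth, let $X\subset\mathbb{R}^d$ be compact convex, and assume there is $x^\star\in X$ with $f(x^\star)=\min_{\mathbb{R}^d}f=\min_X f$. Let $T\ge1$ and let $(x^{(t)})_{1\le t\le T}$ and $(g^{(t)})$ be generated by the AdaLVR algorithm (described in the context, with either AdaGrad variant and either gradient estimator type, and $p=1/n$ in the L-SVRG case). Then $$\mathbb{E}\Big[\sum_{t=1}^T\mathbb{E}_t\big[\|g^{(t)}\|^2\big]\Big]\le \mathbb{E}\Big[8L\sum_{t=1}^T\big(f(x^{(t)})-f(x^\star)\big)\Big]+4Ln\big(f(x^{(1)})-f(x^\star)\big).$$
   Context: AdaLVR algorithm with inputs $x^{(1)}\in\mathbb{R}^d$, $\eta>0$, $p\in(0,1)$: set $G_0=0$; for SAGA set $\tilde x_i^{(0)}=x^{(1)}$ ($1\le i\le n$), for L-SVRG set $\tilde x^{(0)}=x^{(1)}$. For $t=1,2,\dots$: sample $i(t)$ uniformly from $\{1,\dots,n\}$ independently of the past; compute (SAGA) $g^{(t)}=\nabla f_{i(t)}(x^{(t)})-\nabla f_{i(t)}(\tilde x^{(t-1)}_{i(t)})+\frac1n\sum_{i}\nabla f_i(\tilde x_i^{(t-1)})$ and set $\tilde x_{i}^{(t)}=x^{(t)}$ if $i=i(t)$, else $\tilde x_i^{(t)}=\tilde x_i^{(t-1)}$; or (L-SVRG) $g^{(t)}=\nabla f_{i(t)}(x^{(t)})-\nabla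 f_{i(t)}(\tilde x^{(t-1)})+\nabla f(\tilde x^{(t-1)})$, sample $Z^{(t)}\sim\mathrm{Bernoulli}(p)$ independently and set $\tilde x^{(t)}=x^{(t)}$ if $Z^{(t)}=1$, else $\tilde x^{(t)}=\tilde x^{(t-1)}$. Set $G_t=G_{t-1}+\|g^{(t)}\|^2$ (Norm) or $G_t=G_{t-1}+\operatorname{diag}(g^{(t)}g^{(t)\top})$ (Diagonal, off-diagonal entries zeroed), $A_t=G_t^{1/2}$, and $x^{(t+1)}\in\arg\min_{y\in X}\|y-(x^{(t)}-\eta A_t^{-1}g^{(t)})\|_{A_t}$, with $A_t^{-1}$ the Moore–Penrose pseudo-inverse and $\|v\|_A=\langle v,Av\rangle^{1/2}$. $\mathbb{E}_t$ denotes conditional expectation given the history up to the computation of $x^{(t)}$ (i.e. integrating over $i(t)$ and $Z^{(t)}$). *)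

(* Defs.v *)
From HB Require Import structures.
From mathcomp Require Import all_boot all_order all_algebra.
From mathcomp Require Import all_classical all_reals all_analysis.

Set Implicit Arguments.
Unset Strict Implicit.
Unset Printing Implicit Defensive.

Import Order.TTheory GRing.Theory Num.Theory.
Import numFieldNormedType.Exports.
Local Open Scope classical_set_scope.
Local Open Scope ring_scope.

Inductive estimator := SAGA | LSVRG.
Inductive adagrad_variant := NormVar | DiagVar.

Section AdaLVR.
Variables (R : realType) (d n : nat).
Local Notation vec := 'rV[R]_d.

Definition dotp (u v : vec) : R := \sum_(k < d) u ord0 k * v ord0 k.
Definition sqnorm (v : vec) : R := \sum_(k < d) v ord0 k ^+ 2.
Definition enorm (v : vec) : R := Num.sqrt (sqnorm v).

(** ||v||_A = <v, A v>^(1/2) for the diagonal matrix A = diag(a). *)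
Definition anorm (a v : vec) : R :=
  Num.sqrt (\sum_(k < d) a ord0 k * v ord0 k ^+ 2).

Definition convex_fun (g : vec -> R) : Prop :=
  forall x y (t : R), 0 <= t <= 1 ->
    g (t *: x + (1 - t) *: y) <= t * g x + (1 - t) * g y.

Definition favg (f : 'I_n -> vec -> R) (x : vec) : R :=
  n%:R^-1 * \sum_(i < n) f i x.
Definition gavg (grad : 'I_n -> vec -> vec) (x : vec) : vec :=
  n%:R^-1 *: \sum_(i < n) grad i x.

Definition is_proj_sel (X : set vec) (proj : vec -> vec -> vec) : Prop :=
  forall a y : vec, (forall k, 0 <= a ord0 k) ->
    X (proj a y) /\ forall z, X z -> anorm a (proj a y - y) <= anorm a (z - y).

(** Algorithm state: x^(t), diagonal of G_{t-1} (for the Norm variant all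
    entries are equal to the scalar G_{t-1}), SAGA table (tilde x_i),
    L-SVRG snapshot (tilde x). *)
Record state := State {
  st_x : vec; st_G : vec; st_tab : 'I_n -> vec; st_snap : vec }.

(** Random choice made at one iteration: i(t) for SAGA, (i(t), Z(t)) for L-SVRG. *)
Definition choiceT (k : estimator) : finType :=
  match k with SAGA => ('I_n : finType) | LSVRG => (('I_n * bool)%type : finType) end.

Definition weight (k : estimator) (p : R) : choiceT k -> R :=
  match k return choiceT k -> R with
  | SAGA => fun _ => n%:R^-1
  | LSVRG => fun c => n%:R^-1 * (if c.2 then p else 1 - p)
  end.

Definition gest (grad : 'I_n -> vec -> vec) (k : estimator) (s : state)
  : choiceT k -> vec :=
  match k return choiceT k -> vec with
  | SAGA => fun i => grad i (st_x s) - grad i (st_tab s i)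
                     + n%:R^-1 *: \sum_(j < n) grad j (st_tab s j)
  | LSVRG => fun c => grad c.1 (st_x s) - grad c.1 (st_snap s) + gavg grad (st_snap s)
  end.

Definition new_tab (k : estimator) (s : state) : choiceT k -> 'I_n -> vec :=
  match k return choiceT k -> 'I_n -> vec with
  | SAGA => fun i j => if j == i then st_x s else st_tab s j
  | LSVRG => fun _ => st_tab s
  end.

Definition new_snap (k : estimator) (s : state) : choiceT k -> vec :=
  match k return choiceT k -> vec with
  | SAGA => fun _ => st_snap s
  | LSVRG => fun c => if c.2 then st_x s else st_snap s
  end.

Definition step (grad : 'I_n -> vec -> vec) (ada : adagrad_variant) (eta : R)
  (proj : vec -> vec -> vec) (k : estimator) (s : state) (c : choiceT k) : state :=
  let g := gest grad s c in
  let G' := match ada with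
            | NormVar => st_G s + const_mx (sqnorm g)
            | DiagVar => st_G s + map_mx (fun a => a ^+ 2) g
            end in
  let A := map_mx Num.sqrt G' in
  (* A^{-1} g with the Moore-Penrose pseudo-inverse of the diagonal A
     (in MathComp 0^-1 = 0) *)
  let y := st_x s - eta *: (\row_(j < d) (g ord0 j / A ord0 j)) in
  State (proj A y) G' (new_tab s c) (new_snap s c).

Definition init_state (x1 : vec) : state := State x1 0 (fun _ => x1) x1.

(** State after the choices [w] (the state holding x^(size w + 1)). *)
Definition run grad ada eta proj k (x1 : vec) (w : seq (choiceT k)) : state :=
  foldl (@step grad ada eta proj k) (init_state x1) w.

Definition Exp (k : estimator) (p : R) (T : nat) (F : T.-tuple (choiceT k) -> R) : R :=
  \sum_(w : T.-tuple (choiceT k)) (\prod_(t < T) weight p (tnth w t)) * F w.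

(** E_t[ ||g^(t)||^2 ] given the history (the state holding x^(t)). *)
Definition cond_sqnorm grad k (p : R) (s : state) : R :=
  \sum_(c : choiceT k) weight p c * sqnorm (gest grad s c).

End AdaLVR.

(* Main.v *)
Require Import Defs.
From HB Require Import structures.
From mathcomp Require Import all_boot all_order all_algebra.
From mathcomp Require Import all_classical all_reals all_analysis.
Import Order.TTheory GRing.Theory Num.Theory.
Import numFieldNormedType.Exports.
Local Open Scope classical_set_scope.
Local Open Scope ring_scope.
From mathcomp Require Import ring lra.
Section An.
Variables (R : realType) (d : nat).
Local Notation vec := 'rV[R]_d.

Lemma sqnorm_ge0 (v : vec) : 0 <= sqnorm v.
Proof. by apply: sumr_ge0 => k _; rewrite sqr_ge0. Qed.

Lemma enorm_sq (v : vec) : enorm v ^+ 2 = sqnorm v.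
Proof. by rewrite /enorm sqr_sqrtr // sqnorm_ge0. Qed.

Lemma sqnormZ (s : R) (v : vec) : sqnorm (s *: v) = s ^+ 2 * sqnorm v.
Proof. rewrite /sqnorm mulr_sumr; apply: eq_bigr => k _; rewrite mxE; ring. Qed.

Lemma enormZ (s : R) (v : vec) : 0 <= s -> enorm (s *: v) = s * enorm v.
Proof. by move=> s0; rewrite /enorm sqnormZ sqrtrM ?sqr_ge0 // sqrtr_sqr ger0_norm. Qed.

Lemma dotp_le (a h : vec) (c : R) : 0 < c ->
  dotp a h <= (sqnorm a / c + c * sqnorm h) / 2.
Proof.
move=> c0; rewrite /dotp /sqnorm mulr_suml mulr_sumr -big_split /= mulr_suml.
apply: ler_sum => k _.
set u := a ord0 k; set w := h ord0 k.
have -> : u ^+ 2 / c = (u / c) ^+ 2 * c by field; rewrite gt_eqF.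
have E : u * w = (u / c) * w * c by field; rewrite gt_eqF.
rewrite E; set z := u / c.
have : 0 <= c * (z - w) ^+ 2 by rewrite mulr_ge0 ?sqr_ge0 // ltW.
nra.
Qed.

Lemma dotpZBl (sg : R) (u v h : vec) :
  dotp (sg *: (u - v)) h = sg * (dotp u h - dotp v h).
Proof.
rewrite /dotp -sumrB mulr_sumr; apply: eq_bigr => k _; rewrite !mxE; ring.
Qed.

Lemma sqnormZB (sg : R) (u : vec) : sg ^+ 2 = 1 -> sqnorm (sg *: u) = sqnorm u.
Proof. by move=> h; rewrite sqnormZ h mul1r. Qed.
Lemma line_derive (F : vec -> R) (x h : vec) (t : R) :
  derivable F (t *: h + x) h ->
  derivable (fun s : R => F (s *: h + x)) t 1 /\
  'D_1 (fun s : R => F (s *: h + x)) t = 'D_h F (t *: h + x).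
Proof.
have E : (fun s : R => s^-1 *: (((fun s0 : R => F (s0 *: h + x)) \o shift t) (s *: 1) - F (t *: h + x)))
  = (fun s => s^-1 *: ((F \o shift (t *: h + x)) (s *: h) - F (t *: h + x))).
  apply/funext => s /=; congr (_ *: (F _ - _)).
  by rewrite /shift /= scalerDl [_%:A]mulr1 addrA.
by rewrite /derivable /derive E.
Qed.

Lemma taylor_sg (F : vec -> R) (G : vec -> vec) (L : R) :
  0 < L -> (forall x, differentiable F x /\ forall h, 'd F x h = dotp (G x) h) ->
  (forall x y, enorm (G x - G y) <= L * enorm (x - y)) ->
  forall (sg : R) x h, sg ^+ 2 = 1 ->
  sg * (F (h + x) - F x - dotp (G x) h) <= L / 2 * sqnorm h.
Proof.
move=> L0 dF LG sg x h sg2.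
pose g := fun s : R => F (s *: h + x).
have gd : forall t : R, is_derive t (1:R) g (dotp (G (t *: h + x)) h).
  move=> t; have [dd dv] := dF (t *: h + x).
  have [d1 d2] := @line_derive F x h t (diff_derivable (v:=h) dd).
  apply: DeriveDef => //; rewrite d2 deriveE //.
pose c := dotp (G x) h; pose K := L / 2 * sqnorm h.
pose psi : R -> R := (sg \*: g) - ((sg * c) \*: id) - (K \*: (id * id)).
have hd : forall t : R, is_derive t (1:R) psi (sg * dotp (G (t *: h + x)) h - sg * c - K * (t + t)).
  by move=> t; apply: is_derive_eq; rewrite ![_%:A]mulr1.
have dpsi : forall t : R, derivable psi t 1 by move=> t; have [] := hd t.
have Dpsi : forall t : R, derive1 psi t = sg * dotp (G (t *: h + x)) h - sg * c - K * (t + t).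
  by move=> t; rewrite derive1E derive_val.
have key : psi 1 <= psi 0.
  apply: (@ler0_derive1_nincr _ psi 0 1) => //.
  - move=> t /andP[t0 t1]; rewrite Dpsi.
    rewrite bnd_simp in t0.
    rewrite /c -mulrBr -dotpZBl.
    set a := sg *: _.
    have Lt0 : 0 < L * t by rewrite mulr_gt0.
    have := @dotp_le a h (L * t) Lt0.
    have sa : sqnorm a <= (L * t) ^+ 2 * sqnorm h.
      rewrite /a sqnormZB // -enorm_sq -[sqnorm h]enorm_sq -exprMn.
      apply: lerXn2r; rewrite ?nnegrE.
      - exact: sqrtr_ge0.
      - by apply: mulr_ge0; [exact: ltW | exact: sqrtr_ge0].
      apply: (le_trans (LG _ _)); rewrite addrK.
      by rewrite enormZ ?mulrA // ltW.
    have sa' : sqnorm a / (L * t) <= L * t * sqnorm h.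
      rewrite ler_pdivrMr //; apply: (le_trans sa); rewrite le_eqVlt; apply/orP; left; apply/eqP; ring.
    move=> hh; rewrite subr_le0; apply: (le_trans hh).
    apply: (le_trans (y := (L * t * sqnorm h + L * t * sqnorm h) / 2)).
      by rewrite ler_pM2r ?invr_gt0 ?ltr0n // lerD2r.
    rewrite /K le_eqVlt; apply/orP; left; apply/eqP; field.
  - by [].
  - by apply: derivable_within_continuous => t _; exact: dpsi.
have E1 : psi 1 = sg * F (h + x) - sg * c - K.
  by rewrite /psi /g !fctE /= scale1r [_%:A]mulr1 mulr1 -[K in RHS](mulr1 K).
have E0 : psi 0 = sg * F x.
  by rewrite /psi /g !fctE /= scale0r add0r scaler0 mulr0 scaler0 !subr0.
move: key; rewrite E1 E0 /c /K => key.
have -> : sg * (F (h + x) - F x - dotp (G x) h) = (sg * F (h + x) - sg * dotp (G x) h - L / 2 * sqnorm h) - sg * F x + L / 2 * sqnorm h by ring.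
lra.
Qed.

Lemma dotpDr (a u v : vec) : dotp a (u + v) = dotp a u + dotp a v.
Proof. rewrite /dotp -big_split /=; apply: eq_bigr => k _; rewrite !mxE; ring. Qed.
Lemma dotpBr (a u v : vec) : dotp a (u - v) = dotp a u - dotp a v.
Proof. rewrite /dotp -sumrB; apply: eq_bigr => k _; rewrite !mxE; ring. Qed.
Lemma dotpZr (a u : vec) s : dotp a (s *: u) = s * dotp a u.
Proof. rewrite /dotp mulr_sumr; apply: eq_bigr => k _; rewrite !mxE; ring. Qed.
Lemma dotpBl (a u v : vec) : dotp (u - v) a = dotp u a - dotp v a.
Proof. rewrite /dotp -sumrB; apply: eq_bigr => k _; rewrite !mxE; ring. Qed.
Lemma dotpvv (u : vec) : dotp u u = sqnorm u.
Proof. by rewrite /dotp /sqnorm; apply: eq_bigr => k _; rewrite expr2. Qed.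
Lemma sqnormN (u : vec) : sqnorm (- u) = sqnorm u.
Proof. by rewrite /sqnorm; apply: eq_bigr => k _; rewrite mxE sqrrN. Qed.
Lemma dotp0l (u : vec) : dotp 0 u = 0.
Proof. by rewrite /dotp big1 // => k _; rewrite mxE mul0r. Qed.

Lemma small_le0 (a C : R) : 0 <= C -> (forall t, 0 < t -> t <= 1 -> a <= t * C) -> a <= 0.
Proof.
move=> C0 h; case: (lerP a 0) => // a0.
have d0 : 0 < a + C + 1 by lra.
have t0 : 0 < a / (a + C + 1) by rewrite divr_gt0.
have t1 : a / (a + C + 1) <= 1.
  rewrite ler_pdivrMr // mul1r; lra.
have := h _ t0 t1.
have : a / (a + C + 1) * C < a.
  rewrite mulrAC ltr_pdivrMr //; nra.
move=> h1 h2; have := lt_le_trans h1 h2; by rewrite ltxx.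
Qed.

Section Smooth.
Variables (F : vec -> R) (G : vec -> vec) (L : R).
Hypothesis L0 : 0 < L.
Hypothesis dF : forall x, differentiable F x /\ forall h, 'd F x h = dotp (G x) h.
Hypothesis LG : forall x y, enorm (G x - G y) <= L * enorm (x - y).

Lemma descent x y : F y <= F x + dotp (G x) (y - x) + L / 2 * sqnorm (y - x).
Proof.
have := @taylor_sg F G L L0 dF LG 1 x (y - x) (expr1n _ _).
rewrite mul1r subrK => h; lra.
Qed.

Lemma lowerb x h : F x + dotp (G x) h - L / 2 * sqnorm h <= F (h + x).
Proof.
have sg2 : (-1 : R) ^+ 2 = 1 by rewrite sqrrN expr1n.
have := @taylor_sg F G L L0 dF LG (-1) x h sg2.
move=> h'; lra.
Qed.

Hypothesis cF : convex_fun F.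

Lemma firstorder x y : F x + dotp (G x) (y - x) <= F y.
Proof.
set S := sqnorm (y - x).
suff : dotp (G x) (y - x) - (F y - F x) <= 0 by move=> h; lra.
apply: (@small_le0 _ (L / 2 * S)).
  by rewrite mulr_ge0 ?sqnorm_ge0 // divr_ge0 // ltW.
move=> t t0 t1.
have t01 : 0 <= t <= 1 by rewrite t1 ltW.
have hc := @cF y x t t01.
have E : t *: y + (1 - t) *: x = t *: (y - x) + x.
  by rewrite scalerBr scalerBl scale1r addrA [RHS]addrAC.
rewrite E in hc.
have hl := lowerb x (t *: (y - x)).
rewrite dotpZr sqnormZ in hl.
have : t * (dotp (G x) (y - x) - (F y - F x)) <= t * (t * (L / 2 * S)).
  rewrite /S; nra.
by rewrite ler_pM2l.
Qed.

Lemma cocoercive x z :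
  sqnorm (G x - G z) <= 2 * L * (F x - F z - dotp (G z) (x - z)).
Proof.
set u := G x - G z.
set y := x - L^-1 *: u.
have h1 := firstorder z y.
have h2 := descent x y.
have E1 : y - x = - (L^-1 *: u) by rewrite /y addrAC subrr add0r.
have E2 : y - z = (x - z) - L^-1 *: u by rewrite /y addrAC.
rewrite E1 sqnormN sqnormZ in h2.
rewrite E2 dotpBr dotpZr in h1.
have E3 : dotp (G x) (- (L^-1 *: u)) = - (L^-1 * dotp (G x) u).
  by rewrite -scaleNr dotpZr mulNr.
rewrite E3 in h2.
have E4 : dotp (G x) u - dotp (G z) u = sqnorm u by rewrite -dotpBl dotpvv.
have LI : L * L^-1 = 1 by rewrite mulfV // gt_eqF.
move: h1 h2 E4 LI.
set A := dotp (G x) u; set B := dotp (G z) u.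
set Su := sqnorm u; set D := dotp (G z) (x - z); set iL := L^-1.
move=> h1 h2 E4 LI.
have E5 : L / 2 * (iL ^+ 2 * Su) = iL * Su / 2 * (L * iL) by ring.
rewrite E5 LI mulr1 in h2.
have H : iL * Su / 2 <= F x - F z - D.
  have : iL * Su = iL * A - iL * B by rewrite -E4; ring.
  move=> h3; lra.
have E6 : Su = 2 * L * (iL * Su / 2).
  have -> : 2 * L * (iL * Su / 2) = (L * iL) * Su by field.
  by rewrite LI mul1r.
rewrite [X in X <= _]E6; apply: ler_wpM2l => //.
by rewrite mulr_ge0 // ltW.
Qed.
End Smooth.
End An.
Section Prob.
Variables (R : realType) (C : finType) (wt : C -> R).

Definition ExpT T (F : T.-tuple C -> R) : R :=
  \sum_(w : T.-tuple C) (\prod_(t < T) wt (tnth w t)) * F w.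

Arguments ExpT {T}.

Fixpoint Em (m : nat) (H : seq C -> R) : R :=
  match m with
  | 0 => H [::]
  | m'.+1 => \sum_(c : C) wt c * Em m' (fun s => H (c :: s))
  end.

Lemma sum_tuple_cons T (F : T.+1.-tuple C -> R) :
  \sum_(w : T.+1.-tuple C) F w = \sum_(c : C) \sum_(w : T.-tuple C) F [tuple of c :: w].
Proof.
rewrite pair_big /=.
rewrite (reindex (fun p : C * T.-tuple C => [tuple of p.1 :: p.2])) /=; first by [].
exists (fun w => (thead w, [tuple of behead w])) => [[c w] _ | w _] /=.
  by congr pair; apply: val_inj.
by rewrite -tuple_eta.
Qed.

Lemma sum_tuple0 (F : 0.-tuple C -> R) : \sum_(w : 0.-tuple C) F w = F [tuple].
Proof.
rewrite (big_pred1 [tuple]) // => w; rewrite /= (tuple0 w); exact/esym/eqxx.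
Qed.

Hypothesis wt1 : \sum_(c : C) wt c = 1.

Lemma ExpT_take T m (H : seq C -> R) : (m <= T)%N ->
  ExpT (fun w : T.-tuple C => H (take m w)) = Em m H.
Proof.
elim: T m H => [|T IH] m H hm.
  rewrite /ExpT sum_tuple0 big_ord0 mul1r.
  by move: hm; rewrite leqn0 => /eqP ->.
rewrite /ExpT sum_tuple_cons.
have E : forall c, \sum_(w : T.-tuple C) (\prod_(t < T.+1) wt (tnth [tuple of c :: w] t)) * H (take m [tuple of c :: w])
   = wt c * ExpT (fun w : T.-tuple C => H (take m (c :: w))).
  move=> c; rewrite /ExpT mulr_sumr; apply: eq_bigr => w _.
  by rewrite big_ord_recl /= mulrA; congr (_ * _ * _); apply: eq_bigr => i _; rewrite tnthS.
rewrite (eq_bigr _ (fun c _ => E c)); clear E.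
case: m hm => [|m] hm /=.
  rewrite (eq_bigr (fun c => wt c * H [::])); last first.
    by move=> c _; congr (_ * _); exact: (IH 0 (fun _ => H [::]) (leq0n _)).
  by rewrite -mulr_suml wt1 mul1r.
apply: eq_bigr => c _; congr (_ * _).
by rewrite (IH m (fun s => H (c :: s))).
Qed.

Lemma Em_rcons m (H : seq C -> R) :
  Em m.+1 H = Em m (fun s => \sum_(c : C) wt c * H (rcons s c)).
Proof.
elim: m H => [|m IH] H; first by [].
transitivity (\sum_(c : C) wt c * Em m.+1 (fun s => H (c :: s))); first by [].
by under eq_bigr => c _ do rewrite IH.
Qed.

Lemma ExpT_D T (F G : T.-tuple C -> R) : ExpT (fun w => F w + G w) = ExpT F + ExpT G.
Proof. by rewrite /ExpT -big_split; apply: eq_bigr => w _; rewrite mulrDr. Qed.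

Lemma ExpT_N T (F : T.-tuple C -> R) : ExpT (fun w => - F w) = - ExpT F.
Proof. by rewrite /ExpT -sumrN; apply: eq_bigr => w _; rewrite mulrN. Qed.

Lemma ExpT_B T (F G : T.-tuple C -> R) : ExpT (fun w => F w - G w) = ExpT F - ExpT G.
Proof. by rewrite /ExpT -sumrB; apply: eq_bigr => w _; rewrite mulrBr. Qed.

Lemma ExpT_Z T a (F : T.-tuple C -> R) : ExpT (fun w => a * F w) = a * ExpT F.
Proof. by rewrite /ExpT mulr_sumr; apply: eq_bigr => w _; rewrite mulrCA. Qed.

Lemma ExpT_sum T m (F : 'I_m -> T.-tuple C -> R) :
  ExpT (fun w => \sum_(i < m) F i w) = \sum_(i < m) ExpT (F i).
Proof.
rewrite /ExpT exchange_big /=; apply: eq_bigr => w _; by rewrite mulr_sumr.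
Qed.

Hypothesis wt0 : forall c, 0 <= wt c.

Lemma Em_ge0 m (H : seq C -> R) : (forall s, 0 <= H s) -> 0 <= Em m H.
Proof.
elim: m H => [|m IH] H hH /=; first exact: hH.
by apply: sumr_ge0 => c _; apply: mulr_ge0 => //; apply: IH.
Qed.

Lemma ExpT_le T (F G : T.-tuple C -> R) : (forall w, F w <= G w) -> ExpT F <= ExpT G.
Proof.
move=> h; apply: ler_sum => w _; apply: ler_wpM2l => //.
by apply: prodr_ge0 => i _.
Qed.
End Prob.

Lemma tele (R : realType) (a : nat -> R) T : \sum_(t < T) (a t - a t.+1) = a 0%N - a T.
Proof.
elim: T => [|T IH]; first by rewrite big_ord0 subrr.
by rewrite big_ord_recr /= IH addrA subrK.
Qed.

Section Var.
Variables (R : realType) (n : nat).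
Hypothesis n0 : (0 < n)%N.

Lemma nR0 : (0 : R) < n%:R. Proof. by rewrite ltr0n. Qed.
Lemma nRV : n%:R * (n%:R : R)^-1 = 1. Proof. by rewrite mulfV // gt_eqF // nR0. Qed.

Lemma var_scalar (al be : 'I_n -> R) (mu : R) :
  mu = n%:R^-1 * \sum_j be j ->
  \sum_i n%:R^-1 * (al i - be i + mu) ^+ 2 <=
  2 * (n%:R^-1 * \sum_i al i ^+ 2) + 2 * (n%:R^-1 * \sum_i be i ^+ 2).
Proof.
move=> Hmu.
have ni : 0 <= (n%:R : R)^-1 by rewrite invr_ge0 ltW // nR0.
have E : \sum_i (be i - mu) ^+ 2 = \sum_i be i ^+ 2 - n%:R * mu ^+ 2.
  have Sb : \sum_j be j = n%:R * mu by rewrite Hmu mulrA nRV mul1r.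
  rewrite (eq_bigr (fun i => be i ^+ 2 - 2 * mu * be i + mu ^+ 2)); last by move=> i _; ring.
  rewrite big_split /= sumrB -mulr_sumr Sb sumr_const card_ord -mulr_natr; ring.
have h1 : \sum_i n%:R^-1 * (al i - be i + mu) ^+ 2 <=
          \sum_i n%:R^-1 * (2 * al i ^+ 2 + 2 * (be i - mu) ^+ 2).
  apply: ler_sum => i _; apply: ler_wpM2l => //; have := sqr_ge0 (al i + (be i - mu)); nra.
apply: (le_trans h1).
rewrite -mulr_sumr big_split /= -!mulr_sumr E.
have : 0 <= n%:R * mu ^+ 2 by rewrite mulr_ge0 ?sqr_ge0 // ltW // nR0.
move=> h2.
have : n%:R^-1 * (2 * (\sum_i al i ^+ 2) + 2 * (\sum_i be i ^+ 2 - n%:R * mu ^+ 2))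
   <= n%:R^-1 * (2 * (\sum_i al i ^+ 2) + 2 * (\sum_i be i ^+ 2)).
  by apply: ler_wpM2l => //; lra.
move=> h3; apply: (le_trans h3); rewrite le_eqVlt; apply/orP; left; apply/eqP; ring.
Qed.
End Var.

Section Vec.
Variables (R : realType) (d n : nat).
Hypothesis n0 : (0 < n)%N.
Local Notation vec := 'rV[R]_d.

Lemma var_vec (a b : 'I_n -> vec) :
  \sum_i n%:R^-1 * sqnorm (a i - b i + n%:R^-1 *: \sum_j b j) <=
  2 * (n%:R^-1 * \sum_i sqnorm (a i)) + 2 * (n%:R^-1 * \sum_i sqnorm (b i)).
Proof.
rewrite /sqnorm.
under eq_bigr => i _ do rewrite mulr_sumr.
rewrite exchange_big /=.
have -> : 2 * (n%:R^-1 * \sum_(i < n) \sum_(k < d) a i ord0 k ^+ 2) +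
  2 * (n%:R^-1 * \sum_(i < n) \sum_(k < d) b i ord0 k ^+ 2) =
  \sum_(k < d) (2 * (n%:R^-1 * \sum_(i < n) a i ord0 k ^+ 2) +
  2 * (n%:R^-1 * \sum_(i < n) b i ord0 k ^+ 2)).
  rewrite big_split /= -!mulr_sumr.
  by congr (2 * (_ * _) + 2 * (_ * _)); exact: exchange_big.
apply: ler_sum => k _.
have := @var_scalar R n n0 (fun i => a i ord0 k) (fun i => b i ord0 k) (n%:R^-1 * \sum_j b j ord0 k) erefl.
move=> h; apply: le_trans h; apply: ler_sum => i _.
by rewrite !mxE summxE.
Qed.
End Vec.

Section VecL.
Variables (R : realType) (d : nat).
Local Notation vec := 'rV[R]_d.
Lemma dotpDl (a u v : vec) : dotp (u + v) a = dotp u a + dotp v a.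
Proof. rewrite /dotp -big_split /=; apply: eq_bigr => k _; rewrite !mxE; ring. Qed.
Lemma dotpZl (a u : vec) s : dotp (s *: u) a = s * dotp u a.
Proof. rewrite /dotp mulr_sumr; apply: eq_bigr => k _; rewrite !mxE; ring. Qed.
Lemma dotp_suml m (v : 'I_m -> vec) (h : vec) : dotp (\sum_i v i) h = \sum_i dotp (v i) h.
Proof.
elim/big_rec2: _ => [|i y1 y2 _ <-]; first exact: dotp0l.
by rewrite dotpDl.
Qed.
Lemma sqnorm_eq0 (v : vec) : sqnorm v = 0 -> v = 0.
Proof.
move=> h; apply/rowP => k; rewrite mxE.
have : v ord0 k ^+ 2 = 0.
  move/eqP: h; rewrite psumr_eq0 => [/allP /(_ k (mem_index_enum _)) /implyP /(_ isT) /eqP //|].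
  by move=> i _; rewrite sqr_ge0.
by move/eqP; rewrite sqrf_eq0 ord1 => /eqP.
Qed.
End VecL.

Section Main.
Variables (R : realType) (d n : nat).
Local Notation vec := 'rV[R]_d.
Variables (f : 'I_n -> vec -> R) (grad : 'I_n -> vec -> vec) (L : R) (xs : vec).
Hypothesis n0 : (0 < n)%N.
Hypothesis L0 : 0 < L.
Hypothesis cvx : forall i, convex_fun (f i).
Hypothesis dif : forall i x, differentiable (f i) x /\ forall h, 'd (f i) x h = dotp (grad i x) h.
Hypothesis lip : forall i x y, enorm (grad i x - grad i y) <= L * enorm (x - y).
Hypothesis xsmin : forall y, favg f xs <= favg f y.

Lemma ni0 : 0 <= (n%:R : R)^-1. Proof. by rewrite invr_ge0 ler0n. Qed.

Lemma sum_grad_xs : \sum_j grad j xs = 0.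
Proof.
set S := \sum_j grad j xs.
set Gb := n%:R^-1 *: S.
have hd : forall y, favg f y <= favg f xs + dotp Gb (y - xs) + L / 2 * sqnorm (y - xs).
  move=> y; rewrite /favg /Gb dotpZl dotp_suml.
  have : \sum_i f i y <= \sum_i (f i xs + dotp (grad i xs) (y - xs) + L / 2 * sqnorm (y - xs)).
    by apply: ler_sum => i _; exact: (@descent _ _ (f i) (grad i) L L0 (dif i) (lip i) xs y).
  rewrite !big_split /= sumr_const card_ord => h.
  have : n%:R^-1 * \sum_i f i y <= n%:R^-1 * (\sum_i f i xs + \sum_i dotp (grad i xs) (y - xs) + L / 2 * sqnorm (y - xs) *+ n).
    by apply: ler_wpM2l => //; exact: ni0.
  move=> h2; apply: (le_trans h2); rewrite le_eqVlt; apply/orP; left; apply/eqP.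
  by rewrite !mulrDr; congr (_ + _); rewrite mulrnAr -mulr_natl mulrA nRV // mul1r.
set y0 := xs - L^-1 *: Gb.
have := hd y0; have := xsmin y0.
have E : y0 - xs = - (L^-1 *: Gb) by rewrite /y0 addrAC subrr add0r.
rewrite E sqnormN sqnormZ -scaleNr dotpZr dotpvv.
set SG := sqnorm Gb; set iL := L^-1 => h1 h2.
have LI : L * iL = 1 by rewrite mulfV // gt_eqF.
have E5 : L / 2 * (iL ^+ 2 * SG) = iL * SG / 2 * (L * iL) by ring.
rewrite E5 LI mulr1 in h2.
have : iL * SG <= 0 by lra.
have iL0 : 0 < iL by rewrite invr_gt0.
rewrite pmulr_rle0 // => SG0.
have : SG = 0 by apply/eqP; rewrite eq_le SG0 sqnorm_ge0.
move/sqnorm_eq0 => Gb0.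
have -> : S = n%:R *: Gb by rewrite /Gb scalerA nRV // scale1r.
by rewrite Gb0 scaler0.
Qed.

Lemma avg_coco y :
  n%:R^-1 * \sum_j sqnorm (grad j y - grad j xs) <= 2 * L * (favg f y - favg f xs).
Proof.
have h : \sum_j sqnorm (grad j y - grad j xs) <=
   \sum_j 2 * L * (f j y - f j xs - dotp (grad j xs) (y - xs)).
  by apply: ler_sum => j _; exact: (@cocoercive _ _ (f j) (grad j) L L0 (dif j) (lip j) (cvx j) y xs).
rewrite -mulr_sumr !sumrB -dotp_suml sum_grad_xs dotp0l subr0 in h.
rewrite /favg -mulrBr mulrCA; apply: ler_wpM2l => //; exact: ni0.
Qed.

Definition pt k (s : state R d n) (j : 'I_n) : vec :=
  match k with SAGA => st_tab s j | LSVRG => st_snap s end.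
Definition Dk k (s : state R d n) : R :=
  n%:R^-1 * \sum_j sqnorm (grad j (pt k s j) - grad j xs).
Definition Ab (y : vec) : R := n%:R^-1 * \sum_j sqnorm (grad j y - grad j xs).

Lemma sub_xs (u v w : vec) : u - v = (u - w) - (v - w).
Proof. by rewrite opprB addrA subrK. Qed.

Lemma sum_shift (v : 'I_n -> vec) : \sum_j grad j (v j) = \sum_j (grad j (v j) - grad j xs).
Proof. by rewrite sumrB sum_grad_xs subr0. Qed.

Lemma pair_sum (F : 'I_n * bool -> R) :
  \sum_(c : ('I_n * bool)%type) F c = \sum_(i < n) (F (i, true) + F (i, false)).
Proof.
symmetry; transitivity (\sum_(i < n) \sum_(b : bool) F (i, b)).
  by apply: eq_bigr => i _; rewrite big_bool.
by rewrite pair_big; apply: eq_bigr => -[i b].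
Qed.

Lemma cond_le k (s : state R d n) :
  cond_sqnorm grad k n%:R^-1 s <= 2 * Ab (st_x s) + 2 * Dk k s.
Proof.
case: k.
  rewrite /cond_sqnorm /= sum_shift.
  under eq_bigr => i _ do rewrite (@sub_xs (grad i (st_x s)) (grad i (st_tab s i)) (grad i xs)).
  rewrite /Ab /Dk /=; exact: (@var_vec _ _ _ n0 (fun i => grad i (st_x s) - grad i xs) (fun i => grad i (st_tab s i) - grad i xs)).
rewrite /cond_sqnorm /= pair_sum /=.
under eq_bigr => i _ do rewrite -mulrDl -mulrDr addrC subrK mulr1.
rewrite /gavg sum_shift.
under eq_bigr => i _ do rewrite (@sub_xs (grad i (st_x s)) (grad i (st_snap s)) (grad i xs)).
rewrite /Ab /Dk /=; exact: (@var_vec _ _ _ n0 (fun i => grad i (st_x s) - grad i xs) (fun i => grad i (st_snap s) - grad i xs)).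
Qed.

Lemma sum_if (j : 'I_n) (A B : R) :
  \sum_(i < n) (if j == i then A else B) = A - B + n%:R * B.
Proof.
have E : \sum_(i < n) (if j == i then A else B) + B = A + \sum_(i < n) B.
  rewrite (bigD1 j) //= eqxx [in RHS](bigD1 j) //=.
  rewrite (eq_bigr (fun _ => B) (P := fun i => i != j)); last by move=> i; rewrite eq_sym => /negbTE ->.
  by rewrite addrAC addrA.
have : \sum_(i < n) (if j == i then A else B) = A + \sum_(i < n) B - B by rewrite -E addrK.
by move=> ->; rewrite sumr_const card_ord -mulr_natl; ring.
Qed.

Lemma lyap k ada eta proj (s : state R d n) :
  \sum_(c : choiceT n k) weight n%:R^-1 c * Dk k (step grad ada eta proj s c)
  = n%:R^-1 * Ab (st_x s) + (1 - n%:R^-1) * Dk k s.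
Proof.
case: k => /=.
  rewrite /Dk /Ab /=.
  have H : forall (i j : 'I_n), sqnorm (grad j (if j == i then st_x s else st_tab s j) - grad j xs)
     = if j == i then sqnorm (grad j (st_x s) - grad j xs) else sqnorm (grad j (st_tab s j) - grad j xs).
    by move=> i j; case: (j == i).
  under eq_bigr => i _ do under eq_bigr => j _ do rewrite H.
  rewrite -mulr_sumr -mulr_sumr exchange_big /=.
  under eq_bigr => j _ do rewrite sum_if.
  rewrite big_split /= sumrB -mulr_sumr.
  set SA := \sum_(j < n) sqnorm (grad j (st_x s) - grad j xs).
  set SB := \sum_(j < n) sqnorm (grad j (st_tab s j) - grad j xs).
  have NI := @nRV R n n0.
  apply/eqP; rewrite -subr_eq0.
  set N := n%:R in NI *; set ni := N^-1 in NI *.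
  have -> : ni * (ni * (SA - SB + N * SB)) - (ni * (ni * SA) + (1 - ni) * (ni * SB)) = ni * SB * (N * ni - 1) by ring.
  by rewrite NI subrr mulr0.
rewrite /Dk /Ab /= pair_sum /=.
rewrite sumr_const card_ord.
set SA := \sum_(j < n) sqnorm (grad j (st_x s) - grad j xs).
set SB := \sum_(j < n) sqnorm (grad j (st_snap s) - grad j xs).
have NI := @nRV R n n0.
set N := n%:R in NI *; set ni := N^-1 in NI *.
apply/eqP; rewrite -subr_eq0.
have -> : (ni * ni * (ni * SA) + ni * (1 - ni) * (ni * SB)) *+ n - (ni * (ni * SA) + (1 - ni) * (ni * SB))
  = (N * ni - 1) * (ni * (ni * SA) + (1 - ni) * (ni * SB)) by rewrite -mulr_natl -/N; ring.
by rewrite NI subrr mul0r.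
Qed.

Lemma weight_ge0 k (c : choiceT n k) : 0 <= weight (n%:R^-1 : R) c.
Proof.
have h0 := ni0.
have h1 : (n%:R : R)^-1 <= 1 by rewrite invr_le1 ?ler1n ?unitfE ?gt_eqF ?ltr0n.
case: k c => [c|[i b]] //=.
by rewrite mulr_ge0 //; case: b => //; rewrite subr_ge0.
Qed.

Lemma weight_sum1 k : \sum_(c : choiceT n k) weight (n%:R^-1 : R) c = 1.
Proof.
case: k => /=.
  by rewrite sumr_const card_ord; move: (@nRV R n n0); rewrite mulr_natl.
rewrite pair_sum /=.
under eq_bigr => i _ do rewrite -mulrDr addrC subrK mulr1.
by rewrite sumr_const card_ord; move: (@nRV R n n0); rewrite mulr_natl.
Qed.

Lemma step_ineq k ada eta proj (s : state R d n) :
  cond_sqnorm grad k n%:R^-1 s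
  + \sum_(c : choiceT n k) weight n%:R^-1 c * (2 * n%:R * Dk k (step grad ada eta proj s c))
  <= 8 * L * (favg f (st_x s) - favg f xs) + 2 * n%:R * Dk k s.
Proof.
under eq_bigr => c _ do rewrite mulrCA.
rewrite -mulr_sumr lyap.
have h1 := cond_le k s.
have h2 := avg_coco (st_x s).
rewrite -/(Ab (st_x s)) in h2.
have NI := @nRV R n n0.
move: h1 h2 NI.
set A := Ab (st_x s); set D := Dk k s; set Fd := favg f (st_x s) - favg f xs.
set N := n%:R; set ni := N^-1 => h1 h2 NI.
have -> : 2 * N * (ni * A + (1 - ni) * D) = 2 * (N * ni) * A + 2 * N * D - 2 * (N * ni) * D by ring.
rewrite NI; lra.
Qed.

Lemma Dk_init k (x1 : vec) : Dk k (@init_state R d n x1) = Ab x1.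
Proof. by case: k. Qed.

Lemma main_bound k ada eta proj (x1 : vec) T :
  ExpT R (choiceT n k) (fun c => weight (n%:R^-1 : R) c) T
    (fun w : T.-tuple (choiceT n k) =>
       \sum_(t < T) cond_sqnorm grad k n%:R^-1 (run grad ada eta proj x1 (take t w)))
  <= ExpT R (choiceT n k) (fun c => weight (n%:R^-1 : R) c) T
    (fun w : T.-tuple (choiceT n k) =>
       8 * L * \sum_(t < T) (favg f (st_x (run grad ada eta proj x1 (take t w))) - favg f xs))
     + 4 * L * n%:R * (favg f x1 - favg f xs).
Proof.
set wt := (fun c : choiceT n k => weight (n%:R^-1 : R) c).
have w0 : forall c, 0 <= wt c := weight_ge0 k.
have w1 : \sum_c wt c = 1 := weight_sum1 k.
set st := run grad ada eta proj x1.
pose V := fun s => 2 * n%:R * Dk k s.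
pose Q := fun (t : nat) (w : seq (choiceT n k)) =>
  V (st (take t w)) - \sum_c wt c * V (step grad ada eta proj (st (take t w)) c).
have pw : forall w : T.-tuple (choiceT n k),
  \sum_(t < T) cond_sqnorm grad k n%:R^-1 (st (take t w)) <=
  8 * L * \sum_(t < T) (favg f (st_x (st (take t w))) - favg f xs) + \sum_(t < T) Q t w.
  move=> w; rewrite mulr_sumr -big_split /=; apply: ler_sum => t _.
  have := step_ineq k ada eta proj (st (take t w)); rewrite /Q /V; lra.
apply: (le_trans (@ExpT_le R _ wt w0 T _ _ pw)).
rewrite ExpT_D ExpT_sum lerD2l.
have EQ : forall t : 'I_T, ExpT R _ wt T (Q t) = Em R _ wt t (fun s => V (st s)) - Em R _ wt t.+1 (fun s => V (st s)).
  move=> t; rewrite /Q ExpT_B.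
  have ht : (t <= T)%N by apply: ltnW.
  rewrite (@ExpT_take R _ wt w1 T t (fun s => V (st s)) ht).
  rewrite (@ExpT_take R _ wt w1 T t (fun s => \sum_c wt c * V (step grad ada eta proj (st s) c)) ht).
  rewrite Em_rcons; congr (_ - Em _ _ _ _ _).
  by apply: funext => s; apply: eq_bigr => c _; rewrite /st /run foldl_rcons.
rewrite (eq_bigr _ (fun t _ => EQ t)) (@tele R (fun t => Em R _ wt t (fun s => V (st s)))) /=.
have hT : 0 <= Em R _ wt T (fun s => V (st s)).
  apply: Em_ge0 => // s; rewrite /V /Dk; apply: mulr_ge0; first by rewrite mulr_ge0 ?ler0n.
  by apply: mulr_ge0; [exact: ni0 | apply: sumr_ge0 => j _; exact: sqnorm_ge0].
have h0 : V (st [::]) <= 4 * L * n%:R * (favg f x1 - favg f xs).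
  have E : Dk k (st [::]) = Ab x1 by rewrite /st /run /= Dk_init.
  rewrite /V E.
  have := avg_coco x1; rewrite -/(Ab x1) => h.
  have : 2 * n%:R * Ab x1 <= 2 * n%:R * (2 * L * (favg f x1 - favg f xs)).
    by apply: ler_wpM2l => //; rewrite mulr_ge0 ?ler0n.
  move=> h2; apply: (le_trans h2); rewrite le_eqVlt; apply/orP; left; apply/eqP; ring.
lra.
Qed.
End Main.

Theorem proposition1 (R : realType) (d n : nat)
  (f : 'I_n -> 'rV[R]_d -> R) (grad : 'I_n -> 'rV[R]_d -> 'rV[R]_d) (L : R)
  (X : set 'rV[R]_d) (xs x1 : 'rV[R]_d) (eta : R)
  (proj : 'rV[R]_d -> 'rV[R]_d -> 'rV[R]_d)
  (ada : adagrad_variant) (k : estimator) (T : nat) :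
  (0 < n)%N -> 0 < L ->
  (forall i, convex_fun (f i)) ->
  (forall i x, differentiable (f i) x /\ forall h, 'd (f i) x h = dotp (grad i x) h) ->
  (forall i x y, enorm (grad i x - grad i y) <= L * enorm (x - y)) ->
  compact X -> convex_set X ->
  X xs -> (forall y, favg f xs <= favg f y) ->
  0 < eta -> is_proj_sel X proj -> (1 <= T)%N ->
  let p := n%:R^-1 in
  @Exp R n k p T (fun w : T.-tuple (choiceT n k) =>
      \sum_(t < T) cond_sqnorm grad k p (run grad ada eta proj x1 (take t w)))
  <= @Exp R n k p T (fun w : T.-tuple (choiceT n k) =>
      8 * L * \sum_(t < T) (favg f (st_x (run grad ada eta proj x1 (take t w))) - favg f xs))
     + 4 * L * n%:R * (favg f x1 - favg f xs).
Proof.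
move=> n0 L0 cvx dif lip _ _ _ xsmin _ _ _.
exact: (@main_bound R d n f grad L xs n0 L0 cvx dif lip xsmin k ada eta proj x1 T).
Qed.
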